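(* Let $\hat g\colon M_2\to\mathbb{R}$ be a real-valued function on the set $M_2=\{(x_1,x_2)\in(0,\infty)^2 : x_1\geq x_2\}$, and let $W\colon \mathrm{GL}^+(2)\to\mathbb{R}$ be given by $W(F)=\hat g(\lambda_{\max}(F),\lambda_{\min}(F))$, where $\lambda_{\max}(F)\geq\lambda_{\min}(F)$ are the singular values of $F$. Suppose $\hat g\in C^2(\operatorname{int} M_2)\cap C^1(M_2)$, and suppose $W$ is Legendre-Hadamard elliptic at each $F\in\mathrm{GL}^+(2)$ with simple singular values $\lambda_{\max}(F)\neq\lambda_{\min}(F)$. Then $W$ is rank-one convex on $\mathrm{GL}^+(2)$.
   Context: $\mathrm{GL}^+(n)$ denotes the group of real invertible $n\times n$ matrices with positive determinant. $\operatorname{int}M_2=\{(x_1,x_2)\in(0,\infty)^2: x_1>x_2\}$. $\hat g\in C^1(M_2)$ means that $\hat g$ is continuously differentiable on $M_2$ up to the boundary $\{(x,x):x>0\}$ relative to $(0,\infty)^2$, i.e. $\hat g$ is the restriction of a continuously differentiable function on $(0,\infty)^2$. A function $W\colon\mathrm{GL}^+(n)\to\mathbb{R}$ is rank-one convex if for all $F_1,F_2\in\mathrm{GL}^+(n)$ with $\operatorname{rank}(F_2-F_1)=1$ and all $t\in[0,1]$ one has $W((1-t)F_1+tF_2)\leq(1-t)W(F_1)+tW(F_2)$. $W$ is Legendre-Hadamard elliptic at $F$ if $W$ is twice differentiable at $F$ and $D^2W[F].(\xi\otimes\eta,\xi\otimes\eta)\geq0$ for all $\xi,\eta\in\mathbb{R}^n$.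 *)

(* Defs.v *)
From HB Require Import structures.
From mathcomp Require Import all_boot all_order all_algebra.
From mathcomp Require Import all_classical all_reals all_analysis.
Set Implicit Arguments. Unset Strict Implicit. Unset Printing Implicit Defensive.
Import Order.TTheory GRing.Theory Num.Theory.
Import numFieldNormedType.Exports.
Local Open Scope classical_set_scope.
Local Open Scope ring_scope.

Section Defs.
Context {R : realType}.

Definition M2 : set (R * R) := [set x | 0 < x.2 /\ x.2 <= x.1].
Definition intM2 : set (R * R) := [set x | 0 < x.2 /\ x.2 < x.1].
Definition quadrant : set (R * R) := [set x | 0 < x.1 /\ 0 < x.2].

(* f is C^1 on the open set U: Frechet differentiable at every point of U,
   with continuous derivative (equivalently, in finite dimension, every
   directional derivative x |-> df(x) v is continuous on U). *)
Definition C1_on {V : normedModType R} (U : set V) (f : V -> R) : Prop :=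
  forall x, U x ->
    differentiable f x /\ forall v : V, {for x, continuous (fun y => 'd f y v)}.

Definition C2_on {V : normedModType R} (U : set V) (f : V -> R) : Prop :=
  C1_on U f /\ forall v : V, C1_on U (fun y => 'd f y v).

(* g in C^1(M_2): g is the restriction to M_2 of a C^1 function on (0,oo)^2 *)
Definition C1_M2 (g : R * R -> R) : Prop :=
  exists G : R * R -> R, C1_on quadrant G /\ forall x, M2 x -> G x = g x.

Definition GLp2 (F : 'M[R]_2) : Prop := 0 < \det F.

(* eigenvalues of the symmetric positive semidefinite 2x2 matrix C = F^T F,
   i.e. the two roots of its characteristic polynomial X^2 - tr C X + det C *)
Definition CG (F : 'M[R]_2) : 'M[R]_2 := F^T *m F.
Definition eig_max (F : 'M[R]_2) : R :=
  (\tr (CG F) + Num.sqrt (\tr (CG F) ^+ 2 - 4 * \det (CG F))) / 2.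
Definition eig_min (F : 'M[R]_2) : R :=
  (\tr (CG F) - Num.sqrt (\tr (CG F) ^+ 2 - 4 * \det (CG F))) / 2.

Definition lambda_max (F : 'M[R]_2) : R := Num.sqrt (eig_max F).
Definition lambda_min (F : 'M[R]_2) : R := Num.sqrt (eig_min F).

Definition W_of (g : R * R -> R) (F : 'M[R]_2) : R := g (lambda_max F, lambda_min F).

(* W twice (Frechet) differentiable at F: differentiable near F, and the
   derivative X |-> dW(X) is differentiable at F (tested on each direction,
   which is equivalent in finite dimension). *)
Definition twice_differentiable_at (W : 'M[R]_2 -> R) (F : 'M[R]_2) : Prop :=
  (\forall X \near F, differentiable W X) /\
  forall H : 'M[R]_2, differentiable (fun X => 'd W X H) F.

Definition D2 (W : 'M[R]_2 -> R) (F H K : 'M[R]_2) : R :=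
  'd (fun X => 'd W X H) F K.

Definition dyad (xi eta : 'cV[R]_2) : 'M[R]_2 := xi *m eta^T.

Definition LH_elliptic_at (W : 'M[R]_2 -> R) (F : 'M[R]_2) : Prop :=
  twice_differentiable_at W F /\
  forall xi eta : 'cV[R]_2, 0 <= D2 W F (dyad xi eta) (dyad xi eta).

Definition rank_one_convex_GLp2 (W : 'M[R]_2 -> R) : Prop :=
  forall F1 F2 : 'M[R]_2, GLp2 F1 -> GLp2 F2 -> \rank (F2 - F1) = 1%N ->
  forall t : R, 0 <= t <= 1 ->
    W ((1 - t) *: F1 + t *: F2) <= (1 - t) * W F1 + t * W F2.

End Defs.

(* Main.v *)
Require Import Defs.
From HB Require Import structures.
From mathcomp Require Import all_boot all_order all_algebra.
From mathcomp Require Import all_classical all_reals all_analysis.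
From mathcomp Require Import ring lra.
Import Order.TTheory GRing.Theory Num.Theory.
Import numFieldNormedType.Exports.
Local Open Scope classical_set_scope.
Local Open Scope ring_scope.

Section S.
Variable R : realType.
Implicit Types F K H A : 'M[R]_2.

Lemma sum2 (f : 'I_2 -> R) : \sum_(i < 2) f i = f 0 + f 1.
Proof. by rewrite !big_ord_recl big_ord0 addr0; congr (f _ + f _); apply: val_inj. Qed.

Lemma det2 F : \det F = F 0 0 * F 1 1 - F 0 1 * F 1 0.
Proof.
rewrite (expand_det_row F 0) sum2 /cofactor !det_mx11 !mxE /=.
have -> : lift 0 (0 : 'I_1) = 1 :> 'I_2 by apply: val_inj.
have -> : lift 1 (0 : 'I_1) = 0 :> 'I_2 by apply: val_inj.
rewrite /= expr0 expr1; ring.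
Qed.

Lemma trCG F : \tr (CG F) = F 0 0 ^+ 2 + F 0 1 ^+ 2 + F 1 0 ^+ 2 + F 1 1 ^+ 2.
Proof.
rewrite /CG /mxtrace sum2 !mxE !sum2 !mxE; ring.
Qed.

Lemma detCG F : \det (CG F) = \det F ^+ 2.
Proof. by rewrite /CG det_mulmx det_tr expr2. Qed.

Lemma sqrt_facts (T D : R) : 0 <= T -> 0 <= D -> 4 * D <= T ^+ 2 ->
  [/\ 0 <= (T - Num.sqrt (T ^+ 2 - 4 * D)) / 2,
  (T - Num.sqrt (T ^+ 2 - 4 * D)) / 2 <= (T + Num.sqrt (T ^+ 2 - 4 * D)) / 2 &
  (0 < D -> 0 < (T - Num.sqrt (T ^+ 2 - 4 * D)) / 2)].
Proof.
move=> T0 D0 DT; set s := Num.sqrt _.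
have s0 : 0 <= s by apply: sqrtr_ge0.
have sT : s <= T.
  rewrite /s -[X in _ <= X](@ger0_norm _ T) // -sqrtr_sqr ler_wsqrtr //; lra.
split; [lra|lra|move=> Dp].
have : s < T.
  have TT : 0 < T ^+ 2 by lra.
  rewrite /s -[X in _ < X](@ger0_norm _ T) // -sqrtr_sqr ltr_sqrt //; lra.
lra.
Qed.

Lemma trCG_ge0 F : 0 <= \tr (CG F).
Proof. rewrite trCG; nra. Qed.

Lemma disc_fact F : \tr (CG F) ^+ 2 - 4 * \det (CG F) =
  ((F 0 0 - F 1 1) ^+ 2 + (F 0 1 + F 1 0) ^+ 2) *
  ((F 0 0 + F 1 1) ^+ 2 + (F 0 1 - F 1 0) ^+ 2).
Proof. rewrite trCG detCG det2; ring. Qed.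

Lemma DT F : 4 * \det (CG F) <= \tr (CG F) ^+ 2.
Proof.
rewrite -subr_ge0 disc_fact; apply: mulr_ge0; apply: addr_ge0; exact: sqr_ge0.
Qed.

Lemma detCG_ge0 F : 0 <= \det (CG F).
Proof. rewrite detCG; exact: sqr_ge0. Qed.

Lemma lam_props F : 0 < \det F -> 0 < lambda_min F /\ lambda_min F <= lambda_max F.
Proof.
move=> dF.
have [h1 h2 h3] := @sqrt_facts _ _ (trCG_ge0 F) (detCG_ge0 F) (DT F).
split.
  rewrite /lambda_min sqrtr_gt0; apply: h3; rewrite detCG; exact: exprn_gt0.
exact: ler_wsqrtr.
Qed.

Lemma lam_simple F : 0 < \det F ->
  (F 0 0 - F 1 1) ^+ 2 + (F 0 1 + F 1 0) ^+ 2 != 0 ->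
  lambda_max F != lambda_min F.
Proof.
move=> dF P0.
have [h1 h2 h3] := @sqrt_facts _ _ (trCG_ge0 F) (detCG_ge0 F) (DT F).
have Q0 : 0 < (F 0 0 + F 1 1) ^+ 2 + (F 0 1 - F 1 0) ^+ 2.
  rewrite det2 in dF; nra.
have P1 : 0 < (F 0 0 - F 1 1) ^+ 2 + (F 0 1 + F 1 0) ^+ 2.
  rewrite lt_def P0 /=; apply: addr_ge0; exact: sqr_ge0.
have sp : 0 < Num.sqrt (\tr (CG F) ^+ 2 - 4 * \det (CG F)).
  by rewrite sqrtr_gt0 disc_fact mulr_gt0.
rewrite /lambda_max /lambda_min eqr_sqrt //; last by apply: le_trans h2.
rewrite /eig_max /eig_min; apply/eqP => E.
move: E sp; set s := Num.sqrt _; set t := \tr _. lra.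
Qed.


Lemma line_eq (W : 'M[R]_2 -> R) A H (s : R) :
  (fun h : R => h^-1 *: ((fun e : R => W (A + e *: H)) (h *: 1 + s) - W (A + s *: H)))
  = (fun h : R => h^-1 *: (W (h *: H + (A + s *: H)) - W (A + s *: H))).
Proof.
apply: funext => h /=.
by rewrite scaler1 scalerDl addrCA.
Qed.

Lemma line_D (W : 'M[R]_2 -> R) A H (s : R) :
  differentiable W (A + s *: H) ->
  derivable (fun e : R => W (A + e *: H)) s 1 /\
  'D_1 (fun e : R => W (A + e *: H)) s = 'd W (A + s *: H) H.
Proof.
move=> dW.
have dv : derivable W (A + s *: H) H by apply: diff_derivable.
rewrite -deriveE //.
split.
  rewrite /derivable line_eq; exact: dv.
by rewrite /derive line_eq.
Qed.

Lemma line_cvg A H (s : R) : (fun e : R => A + e *: H) @ s --> A + s *: H.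
Proof. apply: cvgD; first exact: cvg_cst. exact: cvgZr_tmp. Qed.

Lemma seg_convex (W : 'M[R]_2 -> R) A H :
  (forall s : R, 0 <= s <= 1 ->
     twice_differentiable_at W (A + s *: H) /\ 0 <= D2 W (A + s *: H) H H) ->
  forall t : R, 0 <= t <= 1 -> W (A + t *: H) <= (1 - t) * W A + t * W (A + H).
Proof.
move=> hyp t t01.
set f := fun e : R => W (A + e *: H).
have Hd (s : R) : 0 <= s <= 1 -> differentiable W (A + s *: H).
  by move=> /hyp [[hn _] _]; exact: nbhs_singleton hn.
have Df (s : R) : 0 <= s <= 1 -> {near s, (fun e => 'd W (A + e *: H) H) =1 'D_1 f}.
  move=> /hyp [[hn _] _].
  have hh : \forall e \near s, differentiable W (A + e *: H) := line_cvg A H s _ hn.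
  apply: filterS hh => e de.
  by have [_ ->] := line_D _ _ _ _ de.
have DDf (s : R) : 0 <= s <= 1 ->
    derivable ('D_1 f) s 1 /\ 'D_1 ('D_1 f) s = D2 W (A + s *: H) H H.
  move=> s01; have [[_ hV] _] := hyp s s01.
  have [h1 h2] := line_D _ _ _ _ (hV H).
  split; first exact: near_eq_derivable (Df s s01) h1.
  rewrite -(near_eq_derive _ (Df s s01)).
  exact: h2.
have dF (s : R) : 0 <= s <= 1 -> derivable f s 1 /\ 'D_1 f s = 'd W (A + s *: H) H.
  by move=> /Hd de; exact: line_D _ _ _ _ de.
have cF (s : R) : 0 <= s <= 1 -> {for s, continuous f}.
  move=> /dF [df _]; apply: differentiable_continuous.
  exact/derivable1_diffP.
have p0 : 0 <= 1 - t by lra.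
have p1 : 1 - t <= 1 by lra.
have key := @second_derivative_convex R f 0 1 _ _ _ _ _ (Itv01 p0 p1) ler01.
have i01 (x : R) : 0 < x < 1 -> 0 <= x <= 1.
  by move=> /andP[h1 h2]; apply/andP; split; apply: ltW.
have iin (x : R) : x \in `]0, 1[ -> 0 <= x <= 1.
  by rewrite in_itv /= => /i01.
have K1 : forall x : R, 0 < x < 1 -> 0 <= 'D_1 ('D_1 f) x.
  move=> x /i01 x01; have [_ ->] := DDf x x01.
  by have [_ ->] := hyp x x01.
have K2 : f x @[x --> 1^'-] --> f 1.
  apply: cvg_at_left_filter; apply: cF; lra.
have K3 : f x @[x --> 0^'+] --> f 0.
  apply: cvg_at_right_filter; apply: cF; lra.
have K4 : {in `]0, 1[, forall x, derivable f x 1}.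
  by move=> x /iin /dF [].
have K5 : {in `]0, 1[, forall x, derivable ('D_1 f) x 1}.
  by move=> x /iin /DDf [].
have {key}K := key K1 K2 K3 K4 K5.
move: K; rewrite !convRE /=.
have -> : unstable.onem (1 - t) = t by rewrite /unstable.onem; lra.
by rewrite /f mulr0 add0r mulr1 scale0r addr0 scale1r.
Qed.



Lemma sqrtc (h : 'M[R]_2 -> R) (M : 'M[R]_2) :
  h @ M --> h M -> (fun N => Num.sqrt (h N)) @ M --> Num.sqrt (h M).
Proof. move=> hc; apply: (continuous_comp hc); exact: sqrt_continuous. Qed.

Ltac polyc := repeat first [ apply: cvgD | apply: cvgB | apply: cvgM | apply: cvgN
  | apply: cvg_cst | apply: coord_continuous | exact: nbhs_filter].

Lemma tr_cont : continuous (fun M : 'M[R]_2 => \tr (CG M)).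
Proof.
have -> : (fun M : 'M[R]_2 => \tr (CG M)) =
  (fun M => M 0 0 * M 0 0 + M 0 1 * M 0 1 + M 1 0 * M 1 0 + M 1 1 * M 1 1).
  by apply: funext => M; rewrite trCG !expr2.
move=> M; polyc.
Qed.

Lemma det_cont : continuous (fun M : 'M[R]_2 => \det M).
Proof.
have -> : (fun M : 'M[R]_2 => \det M) =
  (fun M => M 0 0 * M 1 1 - M 0 1 * M 1 0).
  by apply: funext => M; rewrite det2.
move=> M; polyc.
Qed.

Lemma dC_cont : continuous (fun M : 'M[R]_2 => \det (CG M)).
Proof.
have -> : (fun M : 'M[R]_2 => \det (CG M)) = (fun M => \det M * \det M).
  by apply: funext => M; rewrite detCG expr2.
move=> M; apply: cvgM; solve [exact: nbhs_filter | exact: (det_cont M)].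
Qed.

Ltac polyc2 := repeat first [ exact: nbhs_filter | exact: (tr_cont _) | exact: (dC_cont _)
  | apply: cvg_cst | apply: sqrtc | apply: cvgM | apply: cvgD | apply: cvgB ].

Lemma lmin_cont : continuous (@lambda_min R).
Proof.
have -> : @lambda_min R = (fun M => Num.sqrt ((\tr (CG M) -
   Num.sqrt (\tr (CG M) * \tr (CG M) - 4 * \det (CG M))) * 2^-1)).
  by apply: funext => M; rewrite /lambda_min /eig_min expr2.
move=> M. apply: sqrtc. apply: cvgM; [exact: nbhs_filter| |exact: (@cvg_cst _ _ _ _ (nbhs_filter M))].
apply: cvgB; [exact: nbhs_filter|exact: (tr_cont M)|].
apply: sqrtc.
apply: cvgB; [exact: nbhs_filter| |].
  apply: cvgM; [exact: nbhs_filter|exact: (tr_cont M)|exact: (tr_cont M)].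
apply: cvgM; [exact: nbhs_filter|exact: (@cvg_cst _ _ _ _ (nbhs_filter M))|exact: (dC_cont M)].
Qed.

Lemma lmax_cont : continuous (@lambda_max R).
Proof.
have -> : @lambda_max R = (fun M => Num.sqrt ((\tr (CG M) +
   Num.sqrt (\tr (CG M) * \tr (CG M) - 4 * \det (CG M))) * 2^-1)).
  by apply: funext => M; rewrite /lambda_max /eig_max expr2.
move=> M. apply: sqrtc. apply: cvgM; [exact: nbhs_filter| |exact: (@cvg_cst _ _ _ _ (nbhs_filter M))].
apply: cvgD; [exact: nbhs_filter|exact: (tr_cont M)|].
apply: sqrtc.
apply: cvgB; [exact: nbhs_filter| |].
  apply: cvgM; [exact: nbhs_filter|exact: (tr_cont M)|exact: (tr_cont M)].
apply: cvgM; [exact: nbhs_filter|exact: (@cvg_cst _ _ _ _ (nbhs_filter M))|exact: (dC_cont M)].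
Qed.
Lemma lam_le_all F : lambda_min F <= lambda_max F.
Proof.
have [_ h2 _] := @sqrt_facts _ _ (trCG_ge0 F) (detCG_ge0 F) (DT F).
exact: ler_wsqrtr.
Qed.

Lemma W_cont (g : R * R -> R) (Y : 'M[R]_2) : C1_M2 g -> 0 < \det Y ->
  {for Y, continuous (W_of g)}.
Proof.
case=> G [G1 GM] dY.
have [lp ll] := lam_props _ dY.
pose L := fun M : 'M[R]_2 => (lambda_max M, lambda_min M).
have Lc : L @ Y --> L Y.
  exact: (@cvg_pair _ _ _ _ _ _ (nbhs_filter Y) (nbhs_filter _) (nbhs_filter _) _ _ (lmax_cont Y) (lmin_cont Y)).
have GY : quadrant (L Y) by split => //=; exact: lt_le_trans ll.
have Gc : {for L Y, continuous G} := differentiable_continuous (G1 _ GY).1.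
have nearE : \forall M \near Y, G (L M) = W_of g M.
  have hn : \forall M \near Y, 0 < lambda_min M := @cvgr_gt _ _ _ (nbhs_filter Y) _ _ (lmin_cont Y) 0 lp.
  have sub : (fun M => 0 < lambda_min M) `<=` (fun M => G (L M) = W_of g M).
    move=> M hM; rewrite /W_of GM //; split => //=; exact: lam_le_all.
  exact: (@filterS _ _ (nbhs_filter Y) _ _ sub hn).
have E : W_of g Y = G (L Y) by rewrite /W_of GM //; split.
suff h : W_of g @ Y --> G (L Y) by rewrite /prop_for /continuous_at E.
apply: cvg_trans (@near_eq_cvg _ _ _ (nbhs_filter Y) _ _ nearE) _.
exact: (continuous_comp Lc Gc).
Qed.
End S.

Arguments det2 {R}. Arguments seg_convex {R}. Arguments lam_simple {R}.
Arguments W_cont {R}. Arguments det_cont {R}. Arguments line_cvg {R}.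

Section S2.
Variable R : realType.
Implicit Types F K H A : 'M[R]_2.

Lemma det_line A H (s : R) : \det H = 0 ->
  \det (A + s *: H) = (1 - s) * \det A + s * \det (A + H).
Proof.
rewrite !det2 !mxE => hH.
apply/eqP; rewrite -subr_eq0; apply/eqP.
transitivity ((s ^+ 2 - s) * (H 0 0 * H 1 1 - H 0 1 * H 1 0)); first ring.
by rewrite hH mulr0.
Qed.

Lemma rank1_det H : \rank H = 1%N -> \det H = 0.
Proof.
move=> rk; apply/eqP; rewrite -[_ == 0]negbK -unitfE -unitmxE -row_free_unit.
by rewrite /row_free rk.
Qed.

Lemma rank1_dyad H : \rank H = 1%N -> exists xi eta, H = dyad xi eta.
Proof.
move=> rk.
have := mulmx_base H.
move: (col_base H) (row_base H); rewrite rk => X Y XY.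
exists X, Y^T; by rewrite /dyad trmxK XY.
Qed.

Lemma ord2 (i : 'I_2) : i = 0 \/ i = 1.
Proof.
case: i => [[|[|i]] hi]; [left|right|by []]; exact: val_inj.
Qed.

Lemma rank1_nz H : \rank H = 1%N ->
  0 < (H 0 0 - H 1 1) ^+ 2 + (H 0 1 + H 1 0) ^+ 2.
Proof.
move=> rk; have dH := rank1_det _ rk; rewrite det2 in dH.
rewrite lt_def addr_ge0 ?sqr_ge0 // andbT.
apply/negP => /eqP P0.
have P1 : (H 0 0 - H 1 1) ^+ 2 + (H 0 1 + H 1 0) ^+ 2 = 0 by move: P0; lra.
move/eqP: P1; rewrite paddr_eq0 ?sqr_ge0 // !sqrf_eq0 => /andP[/eqP a0 /eqP b0].
have e11 : H 1 1 = H 0 0 by lra.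
have e10 : H 1 0 = - H 0 1 by lra.
rewrite e11 e10 in dH.
have : H 0 0 ^+ 2 + H 0 1 ^+ 2 == 0 by apply/eqP; rewrite -dH; ring.
rewrite paddr_eq0 ?sqr_ge0 // !sqrf_eq0 => /andP[/eqP h00 /eqP h01].
have HH : H = 0.
  apply/matrixP => i j; rewrite mxE.
  case: (ord2 i) => ->; case: (ord2 j) => ->; lra.
by move: rk; rewrite HH mxrank0.
Qed.

Lemma pos_comb (s a b : R) : 0 <= s <= 1 -> 0 < a -> 0 < b -> 0 < (1 - s) * a + s * b.
Proof. move=> /andP[s0 s1] a0 b0; nra. Qed.

Lemma Wline_cont g Y K : C1_M2 g -> 0 < \det Y ->
  (fun e : R => W_of g (Y + e *: K)) @ 0^'+ --> W_of g Y.
Proof.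
move=> C dY; apply: cvg_at_right_filter.
have lc := line_cvg Y K 0; rewrite scale0r addr0 in lc.
exact: (cvg_comp _ _ lc (W_cont g Y C dY)).
Qed.

Lemma detline_cont Y K :
  (fun e : R => \det (Y + e *: K)) @ 0^'+ --> \det Y.
Proof.
apply: cvg_at_right_filter.
have lc := line_cvg Y K 0; rewrite scale0r addr0 in lc.
exact: (cvg_comp _ _ lc (det_cont Y)).
Qed.
End S2.

Arguments det_line {R}. Arguments rank1_det {R}. Arguments rank1_dyad {R}.
Arguments rank1_nz {R}. Arguments pos_comb {R}. Arguments Wline_cont {R}.
Arguments detline_cont {R}.

Theorem theorem3p2 (R : realType) (g : R * R -> R) :
  C2_on intM2 g -> C1_M2 g ->
  (forall F : 'M[R]_2, GLp2 F -> lambda_max F != lambda_min F ->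
     LH_elliptic_at (W_of g) F) ->
  rank_one_convex_GLp2 (W_of g).
Proof.
move=> _ C1 hLH F1 F2 dF1 dF2 rk t t01.
rewrite /GLp2 in dF1 dF2.
set H := F2 - F1.
have E : (1 - t) *: F1 + t *: F2 = F1 + t *: H.
  by apply/matrixP => i j; rewrite /H !mxE; ring.
rewrite E.
have F2E : F2 = F1 + H by rewrite /H addrC subrK.
have dH := rank1_det _ rk.
have [xi [eta Hd]] := rank1_dyad _ rk.
have Pnz := rank1_nz _ rk.
move: Pnz; set al := H 0 0 - H 1 1; set be := H 0 1 + H 1 0 => Pnz.
have [K [K00 K01 K10 K11]] : exists K : 'M[R]_2,
    [/\ K 0 0 = - be, K 0 1 = al, K 1 0 = 0 & K 1 1 = 0].
  exists (\matrix_(i, j) (if i == 0 then (if j == 0 then - be else al) else 0)).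
  by rewrite !mxE.
pose N := al ^+ 2 + be ^+ 2.
pose c := ((F1 0 0 - F1 1 1) * be - (F1 0 1 + F1 1 0) * al) / N.
pose psi e := (1 - t) * W_of g (F1 + e *: K) + t * W_of g (F2 + e *: K)
   - W_of g (F1 + t *: H + e *: K).
have dFt : 0 < \det (F1 + t *: H) by rewrite det_line // -F2E; exact: pos_comb.
have cpsi : psi e @[e --> 0^'+] -->
   (1 - t) * W_of g F1 + t * W_of g F2 - W_of g (F1 + t *: H).
  apply: cvgB; [apply: cvgD; apply: cvgM|].
  - exact: cvg_cst.
  - exact: Wline_cont.
  - exact: cvg_cst.
  - exact: Wline_cont.
  - exact: Wline_cont.
rewrite -/H in dH Hd.
have h1 : \forall e \near 0^'+, 0 < \det (F1 + e *: K) :=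
  cvgr_gt _ (detline_cont F1 K) 0 dF1.
have h2 : \forall e \near 0^'+, 0 < \det (F2 + e *: K) :=
  cvgr_gt _ (detline_cont F2 K) 0 dF2.
have h3 : \forall e \near 0^'+, e != c.
  case: (ltP 0 c) => [c0|c0].
    by apply: filterS (nbhs_right_lt c0) => e ec; rewrite lt_eqF.
  by apply: filterS (nbhs_right_gt 0) => e e0; rewrite gt_eqF // (le_lt_trans c0 e0).
have ev : \forall e \near 0^'+, 0 <= psi e.
  near=> e.
  have d1 : 0 < \det (F1 + e *: K) by near: e; exact: h1.
  have d2 : 0 < \det (F2 + e *: K) by near: e; exact: h2.
  have ec : e != c by near: e; exact: h3.
  pose A := F1 + e *: K.
  have AH : F2 + e *: K = A + H by rewrite F2E /A addrAC.
  have AtH : F1 + t *: H + e *: K = A + t *: H by rewrite /A addrAC.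
  rewrite /psi AH AtH subr_ge0.
  apply: seg_convex => // s s01.
  have dX : 0 < \det (A + s *: H) by rewrite det_line // -AH; exact: pos_comb.
  have u_eq : (A + s *: H) 0 0 - (A + s *: H) 1 1 =
      (F1 0 0 - F1 1 1) - e * be + s * al.
    by rewrite /A /al /H !mxE K00 K11; ring.
  have v_eq : (A + s *: H) 0 1 + (A + s *: H) 1 0 =
      (F1 0 1 + F1 1 0) + e * al + s * be.
    by rewrite /A /be /H !mxE K01 K10; ring.
  have simple : lambda_max (A + s *: H) != lambda_min (A + s *: H).
    apply: lam_simple => //.
    rewrite u_eq v_eq; apply/negP => /eqP P0.
    have P1 : ((F1 0 0 - F1 1 1) - e * be + s * al) ^+ 2 +
       ((F1 0 1 + F1 1 0) + e * al + s * be) ^+ 2 == 0 by apply/eqP.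
    move: P1; rewrite paddr_eq0 ?sqr_ge0 // !sqrf_eq0 => /andP[/eqP u0 /eqP v0].
    move/negP: ec; apply; apply/eqP.
    have eN : e * N = (F1 0 0 - F1 1 1) * be - (F1 0 1 + F1 1 0) * al.
      have : be * ((F1 0 0 - F1 1 1) - e * be + s * al) -
        al * ((F1 0 1 + F1 1 0) + e * al + s * be) = 0 by rewrite u0 v0; ring.
      move=> h.
      have : e * N - ((F1 0 0 - F1 1 1) * be - (F1 0 1 + F1 1 0) * al) =
        - (be * ((F1 0 0 - F1 1 1) - e * be + s * al) -
        al * ((F1 0 1 + F1 1 0) + e * al + s * be)) by rewrite /N; ring.
      by rewrite h oppr0 => /eqP; rewrite subr_eq0 => /eqP.
    have N0 : N != 0 := lt0r_neq0 Pnz.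
    by rewrite /c -eN mulfK.
  have [tw d2H] := hLH _ dX simple.
  split => //; have := d2H xi eta; by rewrite -Hd.
have := @cvgr_to_ge _ _ (at_right_proper_filter 0) _ _ _ _ cpsi ev.
lra.
Unshelve. all: by end_near.
Qed.
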